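(* For an integer $p\ge 0$ and a complex number $z$ with $0<|z|<1$, let $$F(z,p)=\sum_{k=1}^\infty \frac{z^{2k}}{(2k-1)(2k)^p(2k+1)}.$$ Then, if $p$ is even, $$F(z,p)=\frac12\left(\Big(z-\frac1z\Big)\operatorname{arctanh}(z)+1-\sum_{j=1}^{p/2}2^{-(2j-1)}\operatorname{Li}_{2j}(z^2)\right),$$ and, if $p$ is odd, $$F(z,p)=\frac12\left(\Big(z+\frac1z\Big)\operatorname{arctanh}(z)-1+\ln(1-z^2)-\sum_{j=1}^{(p-1)/2}2^{-2j}\operatorname{Li}_{2j+1}(z^2)\right).$$ (Empty sums are $0$.)
   Context: $\operatorname{arctanh}(z)=\int_0^z\frac{dt}{1-t^2}=\frac12\ln\frac{1+z}{1-z}=\sum_{k\ge1}\frac{z^{2k-1}}{2k-1}$ for $|z|<1$ (principal branch of $\ln$). The polylogarithm is $\operatorname{Li}_n(z)=\sum_{k=1}^\infty z^k/k^n$ for $|z|<1$. *)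

(* Defs.v *)
From Stdlib Require Import Reals.
From Coquelicot Require Import Coquelicot.
Open Scope C_scope.

Definition CSeries (a : nat -> C) : C :=
  (Series (fun n => Re (a n)), Series (fun n => Im (a n))).

(* Principal argument in (-PI, PI] and principal logarithm. *)
Definition Carg (w : C) : R :=
  if Rle_dec 0 (Im w) then acos (Re w / Cmod w) else (- acos (Re w / Cmod w))%R.
Definition Cln (w : C) : C := (ln (Cmod w), Carg w).

Definition Carctanh (z : C) : C :=
  CSeries (fun k => z ^ (2 * k + 1) / RtoC (INR (2 * k + 1))).

Definition Li (n : nat) (w : C) : C :=
  CSeries (fun k => w ^ (k + 1) / RtoC (INR (k + 1) ^ n)).

Definition Fzp (z : C) (p : nat) : C :=
  CSeries (fun k => z ^ (2 * (k + 1)) /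
    RtoC (INR (2 * k + 1) * INR (2 * (k + 1)) ^ p * INR (2 * k + 3))).

Fixpoint Csum1 (m : nat) (f : nat -> C) : C :=
  match m with O => 0 | S m' => Csum1 m' f + f m end.

(* Main.v *)
Require Import Defs.
From Stdlib Require Import Reals Lra Lia.
From Coquelicot Require Import Coquelicot.
Open Scope C_scope.
Open Scope R_scope.

Definition Cex (a : nat -> C) := ex_series (fun n => Re (a n)) /\ ex_series (fun n => Im (a n)).

Lemma Rabs_Im_le (c : C) : Rabs (Im c) <= Cmod c.
Proof.
  destruct c as [x y]. unfold Cmod; simpl.
  rewrite <- sqrt_Rsqr_abs. apply sqrt_le_1_alt. unfold Rsqr. nra.
Qed.

Lemma Cex_bound (a : nat -> C) (M r : R) : 0 <= r < 1 ->
  (forall n, Cmod (a n) <= (M * r ^ n)%R) -> Cex a.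
Proof.
  intros Hr H. assert (G : ex_series (fun n => (M * r ^ n)%R)).
  { apply (ex_series_scal_l (V:=R_NormedModule) M (fun n => r^n)). apply ex_series_geom. rewrite Rabs_pos_eq; lra. }
  split; refine (ex_series_le (K:=R_AbsRing) (V:=R_CompleteNormedModule) _ _ _ G); intros n;
   change (norm ?x) with (Rabs x).
  - eapply Rle_trans; [apply re_le_Cmod | apply H].
  - eapply Rle_trans; [apply Rabs_Im_le | apply H].
Qed.

Lemma CSeries_ext a b : (forall n, a n = b n) -> CSeries a = CSeries b.
Proof. intros H. unfold CSeries. f_equal; apply Series_ext; intros; rewrite H; auto. Qed.

Lemma Cex_ext a b : (forall n, a n = b n) -> Cex a -> Cex b.
Proof. intros H [H1 H2]; split.
  - apply (ex_series_ext (fun n => Re (a n))); auto. intros; rewrite H; auto.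
  - apply (ex_series_ext (fun n => Im (a n))); auto. intros; rewrite H; auto. Qed.

Lemma Cex_plus a b : Cex a -> Cex b -> Cex (fun n => (a n + b n)%C).
Proof. intros [a1 a2] [b1 b2]; split; simpl; apply @ex_series_plus; auto. Qed.

Lemma Cex_scal c a : Cex a -> Cex (fun n => (c * a n)%C).
Proof. intros [a1 a2]; destruct c as [c1 c2]; split; simpl.
  - apply @ex_series_minus; apply @ex_series_scal_l; auto.
  - apply @ex_series_plus; apply @ex_series_scal_l; auto.
Qed.

Lemma Cex_shift a : Cex a -> Cex (fun n => a (S n)).
Proof. intros [a1 a2]; split; apply (ex_series_incr_1 (fun n => _ (a n))); auto. Qed.

Lemma CSeries_plus a b : Cex a -> Cex b -> CSeries (fun n => (a n + b n)%C) = (CSeries a + CSeries b)%C.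
Proof. intros [a1 a2] [b1 b2]; unfold CSeries; simpl. rewrite !Series_plus; auto. Qed.

Lemma CSeries_scal c a : Cex a -> CSeries (fun n => (c * a n)%C) = (c * CSeries a)%C.
Proof. intros [a1 a2]; destruct c as [c1 c2]; unfold CSeries; simpl.
  rewrite Series_minus, Series_plus, !Series_scal_l; try apply @ex_series_scal_l; auto.
Qed.

Lemma CSeries_shift a : Cex a -> CSeries a = (a O + CSeries (fun n => a (S n)))%C.
Proof. intros [a1 a2]; unfold CSeries. rewrite (Series_incr_1 (fun n => Re (a n))), (Series_incr_1 (fun n => Im (a n))); auto. Qed.

From Stdlib Require Import Reals Lra Lia.
From Coquelicot Require Import Coquelicot.
Open Scope C_scope.
Open Scope R_scope.

Lemma Cdiv_R (X : C) (r : R) : r <> 0 -> (X / RtoC r = X * RtoC (/ r))%C.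
Proof. intros H. unfold Cdiv. rewrite RtoC_inv; auto. Qed.

Lemma Cex_pd (w : C) (d : nat -> R) (m : nat) : Cmod w < 1 -> (forall k, 1 <= d k) ->
  Cex (fun k => (w ^ (k + m) / RtoC (d k))%C).
Proof.
  intros Hw Hd. apply (Cex_bound _ 1 (Cmod w)). split; [apply Cmod_ge_0|auto].
  intros k. assert (Hdk := Hd k).
  rewrite Cdiv_R by lra. rewrite Cmod_mult, Cmod_R, Cmod_pow.
  rewrite Rabs_pos_eq by (left; apply Rinv_0_lt_compat; lra).
  assert (0 <= Cmod w) by apply Cmod_ge_0.
  assert (/ d k <= 1). { rewrite <- Rinv_1. apply Rinv_le_contravar; lra. }
  assert (Cmod w ^ (k+m) <= Cmod w ^ k).
  { rewrite pow_add. rewrite <- (Rmult_1_r (Cmod w ^ k)) at 2.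
    apply Rmult_le_compat_l. apply pow_le; auto. rewrite <- (pow1 m). apply pow_incr; lra. }
  assert (0 <= Cmod w ^ (k+m)) by (apply pow_le; auto).
  rewrite Rmult_1_l. nra.
Qed.

Lemma INR_a k (a b : nat) : INR (a * k + b) = INR a * INR k + INR b.
Proof. rewrite plus_INR, mult_INR; auto. Qed.

Lemma INR_S1 k : INR (k + 1) = INR k + 1.
Proof. rewrite plus_INR; simpl; ring. Qed.
Lemma INR_2S k : INR (2 * (k + 1)) = 2 * INR k + 2.
Proof. rewrite mult_INR, plus_INR; simpl; ring. Qed.
Lemma INR_21 k : INR (2 * k + 1) = 2 * INR k + 1.
Proof. rewrite plus_INR, mult_INR; simpl; ring. Qed.
Lemma INR_23 k : INR (2 * k + 3) = 2 * INR k + 3.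
Proof. rewrite plus_INR, mult_INR; simpl; ring. Qed.

Definition Fd p k := INR (2 * k + 1) * INR (2 * (k + 1)) ^ p * INR (2 * k + 3).

Lemma Fd_ge1 p k : 1 <= Fd p k.
Proof. unfold Fd. rewrite INR_2S, INR_21, INR_23. assert (0 <= INR k) by apply pos_INR.
  assert (1 <= (2 * INR k + 2) ^ p) by (apply pow_R1_Rle; lra).
  assert (1 <= (2 * INR k + 1) * (2 * INR k + 2) ^ p) by nra. nra. Qed.

Lemma Fzp_eq z p : Fzp z p = CSeries (fun k => ((z^2) ^ (k + 1) / RtoC (Fd p k))%C).
Proof. unfold Fzp. apply CSeries_ext. intros k. rewrite Cpow_mult_r. reflexivity. Qed.

Lemma Cmod_sq_lt1 z : Cmod z < 1 -> Cmod (z^2) < 1.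
Proof. intros. rewrite Cmod_pow. apply pow_lt_1_compat; try lia. split; [apply Cmod_ge_0 | auto]. Qed.

Lemma Fzp_ex z p : Cmod z < 1 -> Cex (fun k => ((z^2) ^ (k + 1) / RtoC (Fd p k))%C).
Proof. intros. apply Cex_pd. apply Cmod_sq_lt1; auto. apply Fd_ge1. Qed.

Lemma Fd_rec p k : / Fd p k = / Fd (p+2) k + (/2)^(p+2) * / (INR (k+1) ^ (p+2)).
Proof.
  unfold Fd. rewrite INR_2S, INR_21, INR_23, INR_S1. assert (0 <= INR k) by apply pos_INR.
  rewrite pow_inv, <- Rinv_mult, <- Rpow_mult_distr, !pow_add.
  replace (2 * (INR k + 1)) with (2 * INR k + 2) by ring.
  assert (0 < (2 * INR k + 2) ^ p) by (apply pow_lt; lra).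
  field. repeat split; try lra; try nra.
Qed.

Lemma Li_ex n w : Cmod w < 1 -> Cex (fun k => (w ^ (k + 1) / RtoC (INR (k+1) ^ n))%C).
Proof. intros. apply Cex_pd; auto. intros k. rewrite INR_S1. apply pow_R1_Rle.
  assert (0 <= INR k) by apply pos_INR. lra. Qed.

Lemma Fzp_rec z p : Cmod z < 1 -> Fzp z (p+2) = (Fzp z p - RtoC((/2)^(p+2)) * Li (p+2) (z^2))%C.
Proof.
  intros Hz. rewrite !Fzp_eq. unfold Li.
  rewrite (CSeries_ext (fun k => (z^2)^(k+1)/RtoC(Fd p k))%C
     (fun k => (z^2)^(k+1)/RtoC(Fd (p+2) k) + RtoC((/2)^(p+2)) * ((z^2)^(k+1)/RtoC(INR(k+1)^(p+2))))%C).
  - rewrite CSeries_plus, CSeries_scal. ring.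
    + apply Li_ex, Cmod_sq_lt1; auto.
    + apply Fzp_ex; auto.
    + apply Cex_scal, Li_ex, Cmod_sq_lt1; auto.
  - intros k. assert (H1 := Fd_ge1 p k). assert (H2 := Fd_ge1 (p+2) k).
    assert (H3 : 0 < INR (k+1) ^ (p+2)) by (apply pow_lt; rewrite INR_S1; assert (0 <= INR k) by apply pos_INR; lra).
    rewrite !Cdiv_R by lra. rewrite Fd_rec, RtoC_plus, RtoC_mult. ring.
Qed.

Lemma CSeries_minus a b : Cex a -> Cex b -> CSeries (fun n => (a n - b n)%C) = (CSeries a - CSeries b)%C.
Proof. intros [a1 a2] [b1 b2]; unfold CSeries. unfold Cminus, Cplus, Copp; simpl.
  f_equal; match goal with |- _ = ?x + - ?y => replace (x + - y) with (x - y) by ring end;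
  rewrite <- Series_minus by auto; apply Series_ext; intros; unfold Re, Im; simpl; ring. Qed.

Definition T (w : C) := CSeries (fun k => (w ^ k / RtoC (INR (2 * k + 1)))%C).

Lemma T_ex w : Cmod w < 1 -> Cex (fun k => (w ^ k / RtoC (INR (2 * k + 1)))%C).
Proof. intros. eapply Cex_ext; [| apply (Cex_pd w (fun k => INR (2*k+1)) 0); auto].
  - intros k; simpl. rewrite Nat.add_0_r. auto.
  - intros k. rewrite INR_21. assert (0 <= INR k) by apply pos_INR. lra. Qed.

Lemma Carctanh_eq z : Cmod z < 1 -> Carctanh z = (z * T (z^2))%C.
Proof. intros Hz. unfold Carctanh, T. rewrite <- CSeries_scal.
  - apply CSeries_ext. intros k. rewrite Cpow_add_r, Cpow_mult_r. simpl. unfold Cdiv. ring.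
  - apply T_ex, Cmod_sq_lt1; auto. Qed.

Lemma T_shift w : Cmod w < 1 -> T w = (1 + CSeries (fun k => w ^ (k + 1) / RtoC (INR (2 * k + 3))))%C.
Proof. intros Hw. unfold T. rewrite CSeries_shift by (apply T_ex; auto). f_equal.
  - simpl. apply injective_projections; simpl; field.
  - apply CSeries_ext. intros k. rewrite Nat.add_1_r. do 3 f_equal; lia.
Qed.

Lemma wT w : Cmod w < 1 -> (w * T w)%C = CSeries (fun k => w ^ (k + 1) / RtoC (INR (2 * k + 1)))%C.
Proof. intros Hw. unfold T. rewrite <- CSeries_scal by (apply T_ex; auto).
  apply CSeries_ext. intros k. rewrite Cpow_add_r. simpl. unfold Cdiv. ring. Qed.

Lemma A_ex w : Cmod w < 1 -> Cex (fun k => w ^ (k + 1) / RtoC (INR (2 * k + 1)))%C.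
Proof. intros. apply Cex_pd; auto. intros k. rewrite INR_21. assert (0 <= INR k) by apply pos_INR. lra. Qed.
Lemma B_ex w : Cmod w < 1 -> Cex (fun k => w ^ (k + 1) / RtoC (INR (2 * k + 3)))%C.
Proof. intros. apply Cex_pd; auto. intros k. rewrite INR_23. assert (0 <= INR k) by apply pos_INR. lra. Qed.

Lemma base_even z : 0 < Cmod z -> Cmod z < 1 ->
  Fzp z 0 = (/2 * ((z - / z) * Carctanh z + 1 - 0))%C.
Proof.
  intros Hz0 Hz1. assert (Hw := Cmod_sq_lt1 z Hz1). assert (zn : z <> 0%C) by (apply Cmod_gt_0; auto).
  rewrite Carctanh_eq by auto.
  replace ((z - / z) * (z * T (z ^ 2)))%C with ((z^2) * T (z^2) - T (z^2))%C by (field; auto).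
  rewrite wT by auto. rewrite (T_shift (z^2)) by auto.
  rewrite Fzp_eq.
  rewrite (CSeries_ext _ (fun k => / 2 * ((z^2) ^ (k + 1) / RtoC (INR (2 * k + 1)) - (z^2) ^ (k + 1) / RtoC (INR (2 * k + 3))))%C).
  - rewrite CSeries_scal, CSeries_minus; try apply A_ex; try apply B_ex; auto. ring.
    apply (Cex_ext (fun k => ((z^2) ^ (k + 1) / RtoC (INR (2 * k + 1)) + (-1) * ((z^2) ^ (k + 1) / RtoC (INR (2 * k + 3))))%C)).
    intros; ring. apply Cex_plus. apply A_ex; auto. apply Cex_scal, B_ex; auto.
  - intros k. assert (0 <= INR k) by apply pos_INR.
    rewrite !Cdiv_R; try (unfold Fd; rewrite ?INR_21, ?INR_23, ?INR_2S; simpl; nra).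
    rewrite <- (RtoC_inv 2) by lra.
    replace (/ Fd 0 k) with (/2 * (/ INR (2 * k + 1) - / INR (2 * k + 3))).
    + rewrite RtoC_mult, RtoC_minus. ring.
    + unfold Fd; rewrite ?INR_21, ?INR_23, ?INR_2S; simpl. field. nra.
Qed.
Definition cr' (w : C) (m : nat) : R := Re (w ^ S m) / INR (S m).
Definition ci' (w : C) (m : nat) : R := Im (w ^ S m) / INR (S m).
Definition cr w := @PS_incr_1 R_AbsRing R_NormedModule (cr' w).
Definition ci w := @PS_incr_1 R_AbsRing R_NormedModule (ci' w).

Lemma radius_ge (c : nat -> R) q r : 0 <= q -> 0 <= r -> q*r <= 1 ->
  (forall n, Rabs (c n) <= q^n) -> Rbar_le r (CV_radius c).
Proof.
  intros Hq Hr Hqr Hc. destruct (CV_radius_bounded c) as [Hub _]. apply Hub.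
  exists 1. intros n. rewrite Rabs_mult, <- RPow_abs, (Rabs_pos_eq r) by auto.
  assert (0 <= r ^ n) by (apply pow_le; auto).
  apply Rle_trans with (q^n * r^n). apply Rmult_le_compat_r; auto.
  rewrite <- Rpow_mult_distr. rewrite <- (pow1 n). apply pow_incr. split; nra.
Qed.

Lemma cr_bound w n : Rabs (cr w n) <= Cmod w ^ n.
Proof. destruct n as [|m]; simpl.
  - change (Rabs 0 <= 1). rewrite Rabs_R0; lra.
  - unfold cr'. assert (0 < INR (S m)) by (apply lt_0_INR; lia).
    unfold Rdiv. rewrite Rabs_mult, Rabs_inv, (Rabs_pos_eq (INR (S m))) by lra.
    assert (Rabs (Re (w ^ S m)) <= Cmod w * Cmod w ^ m).
    { change (Cmod w * Cmod w ^ m) with (Cmod w ^ S m). rewrite <- Cmod_pow. apply re_le_Cmod. }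
    assert (1 <= INR (S m)) by (rewrite S_INR; assert (0 <= INR m) by apply pos_INR; lra).
    assert (/ INR (S m) <= 1) by (rewrite <- Rinv_1; apply Rinv_le_contravar; lra).
    assert (0 < / INR (S m)) by (apply Rinv_0_lt_compat; lra).
    assert (0 <= Rabs (Re (w ^ S m))) by apply Rabs_pos. nra.
Qed.

Lemma ci_bound w n : Rabs (ci w n) <= Cmod w ^ n.
Proof. destruct n as [|m]; simpl.
  - change (Rabs 0 <= 1). rewrite Rabs_R0; lra.
  - unfold ci'. assert (0 < INR (S m)) by (apply lt_0_INR; lia).
    unfold Rdiv. rewrite Rabs_mult, Rabs_inv, (Rabs_pos_eq (INR (S m))) by lra.
    assert (Rabs (Im (w ^ S m)) <= Cmod w * Cmod w ^ m).
    { change (Cmod w * Cmod w ^ m) with (Cmod w ^ S m). rewrite <- Cmod_pow. apply Rabs_Im_le. }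
    assert (1 <= INR (S m)) by (rewrite S_INR; assert (0 <= INR m) by apply pos_INR; lra).
    assert (/ INR (S m) <= 1) by (rewrite <- Rinv_1; apply Rinv_le_contravar; lra).
    assert (0 < / INR (S m)) by (apply Rinv_0_lt_compat; lra).
    assert (0 <= Rabs (Im (w ^ S m))) by apply Rabs_pos. nra.
Qed.

Lemma rad_ok (c : nat -> R) w t : Cmod w < 1 -> (forall n, Rabs (c n) <= Cmod w ^ n) ->
  -1 <= t <= 1 -> Rbar_lt (Rabs t) (CV_radius c).
Proof.
  intros Hw Hc Ht. assert (0 <= Cmod w) by apply Cmod_ge_0.
  apply Rbar_lt_le_trans with (Finite (2 / (1 + Cmod w))).
  - simpl. apply Rle_lt_trans with 1. apply Rabs_le; lra.
    apply (Rmult_lt_reg_r (1 + Cmod w)); [lra|]. field_simplify; lra.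
  - apply (radius_ge c (Cmod w)); auto.
    + left; apply Rdiv_lt_0_compat; lra.
    + apply (Rmult_le_reg_r (1 + Cmod w)); [lra|]. field_simplify; lra.
Qed.

Definition Sseq (w : C) (t : R) (n : nat) : C := (w ^ S n * RtoC (t ^ n))%C.

Lemma Sseq_ex w t : Cmod w < 1 -> -1 <= t <= 1 -> Cex (Sseq w t).
Proof. intros Hw Ht. apply (Cex_bound _ (Cmod w) (Cmod w)). split; [apply Cmod_ge_0|auto].
  intros n. unfold Sseq. rewrite Cmod_mult, Cmod_R, Cmod_pow, <- RPow_abs.
  assert (Rabs t ^ n <= 1). { rewrite <- (pow1 n). apply pow_incr. split; [apply Rabs_pos| apply Rabs_le; lra]. }
  assert (0 <= Cmod w ^ S n) by (apply pow_le, Cmod_ge_0).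
  simpl. simpl in H0. nra.
Qed.

Lemma S_fix w t : Cmod w < 1 -> -1 <= t <= 1 ->
  CSeries (Sseq w t) = (w + RtoC t * w * CSeries (Sseq w t))%C.
Proof. intros Hw Ht. rewrite CSeries_shift at 1 by (apply Sseq_ex; auto).
  rewrite <- CSeries_scal by (apply Sseq_ex; auto). f_equal.
  - unfold Sseq. simpl. apply injective_projections; simpl; ring.
  - apply CSeries_ext. intros n. unfold Sseq. rewrite (Cpow_S w (S n)). simpl pow. rewrite RtoC_mult. ring.
Qed.

Definition Dt (w : C) (t : R) := (1 - t * Re w) ^ 2 + (t * Im w) ^ 2.

Lemma Dt_pos w t : Cmod w < 1 -> 0 <= t <= 1 -> 0 < 1 - t * Re w /\ 0 < Dt w t.
Proof. intros Hw Ht. assert (H := re_le_Cmod w). assert (H1 := Rle_abs (Re w)). assert (H2 := Rle_abs (- Re w)). rewrite Rabs_Ropp in H2.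
  assert (0 < 1 - t * Re w) by nra. split; auto. unfold Dt. nra. Qed.

Lemma S_val w t : Cmod w < 1 -> 0 <= t <= 1 ->
  Re (CSeries (Sseq w t)) = (Re w - t * (Re w ^ 2 + Im w ^ 2)) / Dt w t /\
  Im (CSeries (Sseq w t)) = Im w / Dt w t.
Proof. intros Hw Ht. destruct (Dt_pos w t Hw Ht) as [Ha HD].
  assert (E := S_fix w t Hw ltac:(lra)). revert E HD Ha. unfold Dt.
  generalize (CSeries (Sseq w t)). intros [s1 s2] E. destruct w as [u v]. simpl in *.
  assert (E1 := f_equal fst E). assert (E2 := f_equal snd E). simpl in E1, E2. intros HD Ha.
  assert (F1 : (1-t*u)*s1 + t*v*s2 = u) by nra.
  assert (F2 : (1-t*u)*s2 - t*v*s1 = v) by nra.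
  split.
  - apply (Rmult_eq_reg_r ((1 - t * u) ^ 2 + (t * v) ^ 2)); [|lra].
    unfold Rdiv. rewrite Rmult_assoc, Rinv_l, Rmult_1_r by lra.
    transitivity ((1-t*u)*((1-t*u)*s1 + t*v*s2) - t*v*((1-t*u)*s2 - t*v*s1)); [ring| rewrite F1, F2; ring].
  - apply (Rmult_eq_reg_r ((1 - t * u) ^ 2 + (t * v) ^ 2)); [|lra].
    unfold Rdiv. rewrite Rmult_assoc, Rinv_l, Rmult_1_r by lra.
    transitivity ((1-t*u)*((1-t*u)*s2 - t*v*s1) + t*v*((1-t*u)*s1 + t*v*s2)); [ring| rewrite F1, F2; ring].
Qed.

Lemma PSd_cr w t : PSeries (PS_derive (cr w)) t = Re (CSeries (Sseq w t)).
Proof. unfold PSeries, CSeries. change (Re (?a, ?b)) with a. apply Series_ext; intros n.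
  unfold PS_derive, Sseq. change (cr w (S n)) with (cr' w n). unfold cr'.
  assert (0 < INR (S n)) by (apply lt_0_INR; lia). revert H. generalize (INR (S n)) (w ^ S n)%C. intros d [x y] H. simpl.
  field. lra. Qed.

Lemma PSd_ci w t : PSeries (PS_derive (ci w)) t = Im (CSeries (Sseq w t)).
Proof. unfold PSeries, CSeries. change (Im (?a, ?b)) with b. apply Series_ext; intros n.
  unfold PS_derive, Sseq. change (ci w (S n)) with (ci' w n). unfold ci'.
  assert (0 < INR (S n)) by (apply lt_0_INR; lia). revert H. generalize (INR (S n)) (w ^ S n)%C. intros d [x y] H. simpl.
  field. lra. Qed.

Definition fL w t := PSeries (cr w) t + /2 * ln (Dt w t).
Definition gL w t := PSeries (ci w) t - atan (t * Im w / (1 - t * Re w)).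

Lemma fL_der w t : Cmod w < 1 -> 0 <= t <= 1 -> is_derive (fL w) t 0.
Proof.
  intros Hw Ht. destruct (Dt_pos w t Hw Ht) as [Ha HD]. destruct (S_val w t Hw Ht) as [Sr Si].
  assert (H1 := is_derive_PSeries (cr w) t (rad_ok _ w t Hw (cr_bound w) ltac:(lra))).
  rewrite PSd_cr, Sr in H1.
  assert (H2 : is_derive (fun t => /2 * ln (Dt w t)) t ( - (Re w - t*(Re w^2+Im w^2)) / Dt w t)).
  { revert HD. unfold Dt. intros HD. auto_derive.
    match goal with |- 0 < ?e => replace e with ((1 - t*Re w)^2 + (t*Im w)^2) by ring; exact HD end.
    field. lra. }
  assert (H := is_derive_plus _ _ _ _ _ H1 H2).
  replace 0 with (plus ((Re w - t * (Re w ^ 2 + Im w ^ 2)) / Dt w t) (- (Re w - t * (Re w ^ 2 + Im w ^ 2)) / Dt w t)).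
  exact H. unfold plus; simpl. field. lra.
Qed.

Lemma gL_der w t : Cmod w < 1 -> 0 <= t <= 1 -> is_derive (gL w) t 0.
Proof.
  intros Hw Ht. destruct (Dt_pos w t Hw Ht) as [Ha HD]. destruct (S_val w t Hw Ht) as [Sr Si].
  assert (H1 := is_derive_PSeries (ci w) t (rad_ok _ w t Hw (ci_bound w) ltac:(lra))).
  rewrite PSd_ci, Si in H1.
  assert (H2 : is_derive (fun t => atan (t * Im w / (1 - t * Re w))) t (Im w / Dt w t)).
  { revert HD. unfold Dt. intros HD. auto_derive. lra. field. repeat split; try lra. }
  assert (H := is_derive_minus _ _ _ _ _ H1 H2).
  replace 0 with (minus (Im w / Dt w t) (Im w / Dt w t)).
  exact H. unfold minus, plus, opp; simpl. ring.
Qed.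

Lemma Carg_pos c : 0 < Re c -> Carg c = atan (Im c / Re c).
Proof.
  intros Hx. destruct c as [x y]. unfold Carg, Cmod, Re, Im in *; cbn [fst snd] in *.
  assert (Hs : 0 < sqrt (x ^ 2 + y ^ 2)) by (apply sqrt_lt_R0; nra).
  assert (Hss : sqrt (x ^ 2 + y ^ 2) * sqrt (x ^ 2 + y ^ 2) = x ^ 2 + y ^ 2) by (apply sqrt_sqrt; nra).
  set (s := sqrt (x ^ 2 + y ^ 2)) in *.
  assert (Hq : 0 < x / s) by (apply Rdiv_lt_0_compat; auto).
  rewrite acos_atan by auto.
  assert (E : sqrt (1 - (x / s)²) / (x / s) = Rabs y / x).
  { replace (1 - (x / s)²) with (Rsqr (Rabs y / s)).
    - rewrite sqrt_Rsqr. field. split; lra. apply Rdiv_le_0_compat; [apply Rabs_pos | lra].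
    - unfold Rsqr.
      assert (Hyy : Rabs y * Rabs y = y * y) by (rewrite <- Rabs_mult; apply Rabs_pos_eq; nra).
      replace (Rabs y / s * (Rabs y / s)) with ((Rabs y * Rabs y) / (s*s)) by (field; lra).
      replace (1 - x/s*(x/s)) with ((s*s - x*x)/(s*s)) by (field; lra).
      rewrite Hyy, Hss. f_equal. ring. }
  rewrite E. destruct (Rle_dec 0 y).
  - rewrite Rabs_pos_eq; auto.
  - rewrite Rabs_left by lra. rewrite <- atan_opp. f_equal. field. lra.
Qed.

Lemma Li1_re w : PSeries (cr w) 1 = Re (Li 1 w).
Proof. unfold cr. rewrite PSeries_incr_1, Rmult_1_l. unfold Li, CSeries, PSeries.
  change (Re (?a, ?b)) with a. apply Series_ext. intros n. unfold cr'.
  rewrite pow1, Rmult_1_r. rewrite Nat.add_1_r. assert (0 < INR (S n)) by (apply lt_0_INR; lia).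
  revert H. generalize (INR (S n)) (w ^ S n)%C. intros d [x y] H. simpl. field. lra. Qed.

Lemma Li1_im w : PSeries (ci w) 1 = Im (Li 1 w).
Proof. unfold ci. rewrite PSeries_incr_1, Rmult_1_l. unfold Li, CSeries, PSeries.
  change (Im (?a, ?b)) with b. apply Series_ext. intros n. unfold ci'.
  rewrite pow1, Rmult_1_r. rewrite Nat.add_1_r. assert (0 < INR (S n)) by (apply lt_0_INR; lia).
  revert H. generalize (INR (S n)) (w ^ S n)%C. intros d [x y] H. simpl. field. lra. Qed.

Lemma log_series w : Cmod w < 1 -> Cln (1 - w) = (- Li 1 w)%C.
Proof.
  intros Hw. destruct (Dt_pos w 1 Hw ltac:(lra)) as [Ha HD].
  assert (F : fL w 0 = fL w 1) by (apply eq_is_derive; [intros; apply fL_der; auto | lra]).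
  assert (G : gL w 0 = gL w 1) by (apply eq_is_derive; [intros; apply gL_der; auto | lra]).
  unfold fL, gL in F, G. rewrite !PSeries_0 in F, G.
  change (cr w 0) with 0 in F. change (ci w 0) with 0 in G.
  replace (Dt w 0) with 1 in F by (unfold Dt; ring).
  replace (0 * Im w / (1 - 0 * Re w)) with 0 in G by (field; lra).
  rewrite ln_1, atan_0 in *. rewrite Li1_re in F. rewrite Li1_im in G.
  unfold Cln. apply injective_projections.
  - change (fst (ln (Cmod (1 - w)), Carg (1 - w))) with (ln (Cmod (1 - w))).
    change (fst (- Li 1 w)%C) with (- Re (Li 1 w)).
    assert (Cmod (1 - w) = sqrt (Dt w 1)).
    { unfold Cmod, Dt. f_equal. destruct w as [u v]. simpl. ring. }
    rewrite H. assert (E : ln (Dt w 1) = 2 * ln (sqrt (Dt w 1))).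
    { rewrite <- (sqrt_sqrt (Dt w 1)) at 1 by lra. rewrite ln_mult by (apply sqrt_lt_R0; lra). ring. }
    lra.
  - change (snd (ln (Cmod (1 - w)), Carg (1 - w))) with (Carg (1 - w)).
    change (snd (- Li 1 w)%C) with (- Im (Li 1 w)).
    rewrite Carg_pos.
    + replace (Im (1 - w) / Re (1 - w)) with (- (1 * Im w / (1 - 1 * Re w))).
      * rewrite atan_opp. lra.
      * destruct w as [u v]. simpl in *. field. lra.
    + destruct w as [u v]. simpl in *. lra.
Qed.


Lemma base_odd z : 0 < Cmod z -> Cmod z < 1 ->
  Fzp z 1 = (/2 * ((z + / z) * Carctanh z - 1 + Cln (1 - z ^ 2) - 0))%C.
Proof.
  intros Hz0 Hz1. assert (Hw := Cmod_sq_lt1 z Hz1). assert (zn : z <> 0%C) by (apply Cmod_gt_0; auto).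
  rewrite Carctanh_eq by auto.
  replace ((z + / z) * (z * T (z ^ 2)))%C with ((z^2) * T (z^2) + T (z^2))%C by (field; auto).
  rewrite wT by auto. rewrite (T_shift (z^2)) by auto. rewrite log_series by auto. unfold Li.
  rewrite Fzp_eq.
  rewrite (CSeries_ext _ (fun k => / 2 * (((z^2) ^ (k + 1) / RtoC (INR (2 * k + 1)) + (z^2) ^ (k + 1) / RtoC (INR (2 * k + 3))) - (z^2) ^ (k + 1) / RtoC (INR (k + 1) ^ 1)))%C).
  - rewrite CSeries_scal, CSeries_minus, CSeries_plus; try apply A_ex; try apply B_ex; try apply Li_ex; auto. ring.
    + apply Cex_plus. apply A_ex; auto. apply B_ex; auto.
    + apply (Cex_ext (fun k => (((z^2) ^ (k + 1) / RtoC (INR (2 * k + 1)) + (z^2) ^ (k + 1) / RtoC (INR (2 * k + 3))) + (-1) * ((z^2) ^ (k + 1) / RtoC (INR (k + 1) ^ 1)))%C)).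
      intros; ring. apply Cex_plus. apply Cex_plus. apply A_ex; auto. apply B_ex; auto. apply Cex_scal, Li_ex; auto.
  - intros k. assert (0 <= INR k) by apply pos_INR.
    rewrite !Cdiv_R; try (unfold Fd; rewrite ?INR_21, ?INR_23, ?INR_2S, ?INR_S1; simpl; nra).
    rewrite <- (RtoC_inv 2) by lra.
    replace (/ Fd 1 k) with (/2 * ((/ INR (2 * k + 1) + / INR (2 * k + 3)) - / (INR (k + 1) ^ 1))).
    + rewrite RtoC_mult, RtoC_minus, RtoC_plus. ring.
    + unfold Fd; rewrite ?INR_21, ?INR_23, ?INR_2S, ?INR_S1; simpl. field. nra.
Qed.

Open Scope C_scope.

Theorem theorem1 (p : nat) (z : C) (hz0 : (0 < Cmod z)%R) (hz1 : (Cmod z < 1)%R) :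
  (Nat.Even p ->
     Fzp z p =
       /2 * ((z - / z) * Carctanh z + 1
             - Csum1 (Nat.div2 p) (fun j => RtoC ((/ 2) ^ (2 * j - 1)) * Li (2 * j) (z ^ 2))))
  /\
  (Nat.Odd p ->
     Fzp z p =
       /2 * ((z + / z) * Carctanh z - 1 + Cln (1 - z ^ 2)
             - Csum1 (Nat.div2 p) (fun j => RtoC ((/ 2) ^ (2 * j)) * Li (2 * j + 1) (z ^ 2))))%C.
Proof.
  split.
  - intros [m ->]. rewrite Nat.div2_double. induction m as [|m IH].
    + simpl. apply base_even; auto.
    + replace (2 * S m)%nat with (2 * m + 2)%nat by lia. rewrite Fzp_rec, IH by auto.
      cbn [Csum1]. replace (2 * S m - 1)%nat with (2 * m + 1)%nat by lia.
      replace (2 * S m)%nat with (2 * m + 2)%nat by lia.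
      replace ((/2)^(2*m+2))%R with (/2 * (/2)^(2*m+1))%R
        by (replace (2*m+2)%nat with (S (2*m+1)) by lia; simpl; ring).
      rewrite RtoC_mult, <- RtoC_inv by lra. ring.
  - intros [m ->]. replace (2 * m + 1)%nat with (S (2 * m)) by lia. rewrite Nat.div2_succ_double.
    replace (S (2 * m)) with (2 * m + 1)%nat by lia.
    induction m as [|m IH].
    + simpl. apply base_odd; auto.
    + replace (2 * S m + 1)%nat with ((2 * m + 1) + 2)%nat by lia. rewrite Fzp_rec, IH by auto.
      cbn [Csum1]. replace (2 * S m + 1)%nat with (2 * m + 3)%nat by lia.
      replace (2 * m + 1 + 2)%nat with (2 * m + 3)%nat by lia.
      replace ((/2)^(2*m+3))%R with (/2 * (/2)^(2*S m))%R
        by (replace (2*m+3)%nat with (S (2*S m)) by lia; simpl; ring).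
      rewrite RtoC_mult, <- RtoC_inv by lra. ring.
Qed.
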